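(* Let $h>0$ and $0<\alpha<\pi/8$, and place the target at $g=(0,0)$. Put $t=\dfrac{2h}{\tan(\pi/4-\alpha)}$, $s_p=(-t/2,h)$, $s_q=(t/2,h)$, and $$L=\frac{2h\sin(2\alpha)}{1-\sin(2\alpha)}.$$ Let $D$ be the vertical segment from $(0,0)$ to $(0,-L)$. Then for every camera location $s\in S$ there is a unit vector $u$ such that the wedge $W(s,u)$ contains both $g$ and the whole segment $D$. (Here $L$ equals the length of the vertical diagonal of the intersection of the wedges $W_p\in\mathcal W(g,s_p)$, $W_q\in\mathcal W(g,s_q)$ whose upper boundary rays both pass through $g$.)
   Context: Work in $\mathbb{R}^2$ with coordinates $(x,z)$. The ground line is $G=\{z=0\}$ and the viewing line is $S=\{z=h\}$, $h>0$. Fix $\alpha>0$. For a point $s$ and a unit vector $u$, the wedge $W(s,u)=\{s+rv:\ r\ge 0,\ |v|=1,\ \angle(v,u)\le\alpha\}$ (apex $s$, opening angle $2\alpha$). For a target $g$ and camera location $s$, $\mathcal W(g,s)$ denotes the set of all wedges $W(s,u)$ containing $g$. *)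

(* Defs.v *)
From Stdlib Require Import Reals.
Open Scope R_scope.

Definition pt := (R * R)%type.
Definition dot (a b : pt) : R := fst a * fst b + snd a * snd b.
Definition norm (a : pt) : R := sqrt (dot a a).

Definition angle (v u : pt) : R := acos (dot v u / (norm v * norm u)).

Definition in_wedge (alpha : R) (s u p : pt) : Prop :=
  exists (r : R) (v : pt),
    0 <= r /\ norm v = 1 /\ angle v u <= alpha /\
    p = (fst s + r * fst v, snd s + r * snd v).

(* Main.v *)
Require Import Defs.
From Stdlib Require Import Reals.
From Stdlib Require Import Lra Psatz Classical.
Open Scope R_scope.

Lemma sqrt_le_aux X Y k : 0 <= X -> 0 <= k -> 0 <= Y -> k*k*Y <= X*X -> k * sqrt Y <= X.
Proof.
  intros HX Hk HY H.
  pose proof (sqrt_sqrt Y HY). pose proof (sqrt_pos Y).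
  destruct (Rle_dec (k * sqrt Y) X) as [|n]; [assumption|].
  exfalso. apply Rnot_le_lt in n. nra.
Qed.

Lemma acos_le al y : 0 <= al <= PI -> 0 < cos al -> cos al <= y -> acos y <= al.
Proof.
  intros Hal Hc Hy.
  destruct (Rle_dec 1 y) as [H1|H1].
  - unfold acos. destruct (Rle_dec y (-1)); [lra|].
    destruct (Rle_dec 1 y); [lra|contradiction].
  - apply Rnot_lt_le. intro Hlt.
    pose proof (acos_bound y).
    assert (cos (acos y) < cos al) by (apply cos_decreasing_1; lra).
    rewrite cos_acos in H0; lra.
Qed.

Lemma wedge_of al s u w : 0 <= al <= PI -> 0 < cos al -> dot u u = 1 -> 0 < dot w w ->
  cos al * norm w <= dot w u -> in_wedge al s u (fst s + fst w, snd s + snd w).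
Proof.
  intros Hal Hc Hu Hw H.
  set (r := norm w).
  assert (Hr : 0 < r) by (apply sqrt_lt_R0; exact Hw).
  assert (Hr2 : r * r = dot w w) by (apply sqrt_sqrt; lra).
  exists r, (fst w / r, snd w / r).
  assert (Hvv : dot (fst w / r, snd w / r) (fst w / r, snd w / r) = 1).
  { unfold dot in *; simpl.
    replace (fst w / r * (fst w / r) + snd w / r * (snd w / r)) with ((fst w * fst w + snd w * snd w)/(r*r)) by (field; lra).
    rewrite Hr2. field. lra. }
  split; [lra|]. split.
  - unfold norm. rewrite Hvv. apply sqrt_1.
  - split.
    + unfold angle, norm. rewrite Hvv, Hu, sqrt_1.
      apply acos_le; auto.
      replace (dot (fst w / r, snd w / r) u / (1 * 1)) with (dot w u / r)
        by (unfold dot; simpl; field; lra).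
      apply (Rmult_le_reg_r r); [lra|]. unfold Rdiv. rewrite Rmult_assoc, Rinv_l by lra. rewrite Rmult_1_r; exact H.
    + destruct s, w; simpl. f_equal; field; lra.
Qed.

Lemma key ca a1 a2 b1 b2 c1 c2 :
  a1*a1 + a2*a2 = 1 -> b1*b1+b2*b2 = 1 -> 0 <= ca ->
  2*ca*ca - 1 <= a1*b1+a2*b2 -> 0 < 1 + (a1*b1+a2*b2) -> 0 <= c1 -> 0 <= c2 ->
  let N := sqrt ((a1+b1)*(a1+b1) + (a2+b2)*(a2+b2)) in
  let u := ((a1+b1)/N, (a2+b2)/N) in
  let w := (c1*a1+c2*b1, c1*a2+c2*b2) in
  dot u u = 1 /\ ca * norm w <= dot w u.
Proof.
  intros Ha Hb Hca Hab Hp Hc1 Hc2 N u w.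
  set (M := (a1+b1)*(a1+b1) + (a2+b2)*(a2+b2)).
  assert (HM : M = 2 + 2*(a1*b1+a2*b2)) by (unfold M; nra).
  assert (HN : 0 < N) by (apply sqrt_lt_R0; lra).
  assert (HN2 : N * N = M) by (apply sqrt_sqrt; lra).
  assert (HMd : M = (a1+b1)*(a1+b1) + (a2+b2)*(a2+b2)) by reflexivity.
  unfold u, w in *; clear u w. clearbody N M.
  split.
  - unfold dot; simpl.
    transitivity (M / (N*N)); [rewrite HMd; field; lra|]. rewrite HN2. field. lra.
  - assert (E : dot (c1*a1+c2*b1, c1*a2+c2*b2) ((a1+b1)/N, (a2+b2)/N) = (c1 + c2) * N / 2).
    { unfold dot; simpl.
      transitivity ((c1*((a1*a1+a2*a2) + (a1 * b1 + a2 * b2)) + c2*((a1 * b1 + a2 * b2) + (b1*b1+b2*b2)))/N); [field; lra|].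
      rewrite Ha, Hb.
      replace (a1 * b1 + a2 * b2) with (N*N/2 - 1) by lra. field. lra. }
    rewrite E. unfold norm. apply sqrt_le_aux.
    + apply Rmult_le_pos; [|lra]. nra.
    + lra.
    + unfold dot; cbn [fst snd]. apply Rplus_le_le_0_compat; apply Rle_0_sqr.
    + unfold dot; simpl.
      replace ((c1 + c2) * N / 2 * ((c1 + c2) * N / 2)) with ((c1+c2)*(c1+c2)*(N*N)/4) by field.
      rewrite HN2, HM.
      assert (Hab1 : a1*b1+a2*b2 <= 1) by (pose proof (Rle_0_sqr (a1-b1)); pose proof (Rle_0_sqr (a2-b2)); unfold Rsqr in *; nra).
      assert (Hw : (c1 * a1 + c2 * b1) * (c1 * a1 + c2 * b1) + (c1 * a2 + c2 * b2) * (c1 * a2 + c2 * b2)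
                = c1*c1 + c2*c2 + 2*c1*c2*(a1*b1+a2*b2)) by (transitivity (c1*c1*(a1*a1+a2*a2) + c2*c2*(b1*b1+b2*b2) + 2*c1*c2*(a1*b1+a2*b2)); [ring| rewrite Ha, Hb; ring]).
      rewrite Hw.
      assert (0 <= c1*c1 + c2*c2 + 2*c1*c2*(a1*b1+a2*b2)) by (rewrite <- Hw; apply Rplus_le_le_0_compat; apply Rle_0_sqr).
      assert (Hcc : 0 <= c1*c2) by (apply Rmult_le_pos; lra).
      assert (c1*c1 + c2*c2 + 2*c1*c2*(a1*b1+a2*b2) <= (c1+c2)*(c1+c2)).
      { assert (0 <= c1*c2*(1-(a1*b1+a2*b2))) by (apply Rmult_le_pos; lra). nra. }
      assert (Hk : 0 <= ca*ca) by (apply Rmult_le_pos; lra).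
      assert (Hs : 0 <= (c1+c2)*(c1+c2)) by (apply Rmult_le_pos; lra).
      apply Rle_trans with (ca*ca*((c1+c2)*(c1+c2))).
      { apply Rmult_le_compat_l; lra. }
      replace ((c1 + c2) * (c1 + c2) * (2 + 2 * (a1 * b1 + a2 * b2)) / 4) with
        ((1 + (a1 * b1 + a2 * b2))/2 * ((c1 + c2) * (c1 + c2))) by field.
      apply Rmult_le_compat_r; lra.
Qed.

Theorem lemma1 (h alpha : R) :
  0 < h -> 0 < alpha < PI / 8 ->
  let L := 2 * h * sin (2 * alpha) / (1 - sin (2 * alpha)) in
  forall s : pt, snd s = h ->
  exists u : pt, norm u = 1 /\
    in_wedge alpha s u (0, 0) /\
    (forall z : R, - L <= z <= 0 -> in_wedge alpha s u (0, z)).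
Proof.
  intros Hh [Ha0 Ha8] L s Hs.
  destruct s as [x z0]; simpl in Hs; subst z0.
  pose proof PI_RGT_0 as HPI.
  assert (Hc : 0 < cos (2*alpha)) by (apply cos_gt_0; lra).
  assert (Hsg : 0 < sin (2*alpha)) by (apply sin_gt_0; lra).
  assert (Hca : 0 < cos alpha) by (apply cos_gt_0; lra).
  pose proof (sin2_cos2 (2*alpha)) as Hsc. unfold Rsqr in Hsc.
  pose proof (cos_2a_cos alpha) as Hcc.
  set (sg := sin (2*alpha)) in *. set (c := cos (2*alpha)) in *. set (ca := cos alpha) in *.
  assert (Hs1 : sg < 1) by nra.
  assert (HL : L * (1 - sg) = 2*h*sg) by (unfold L; field; lra).
  assert (HL0 : 0 < L) by (unfold L; apply Rdiv_lt_0_compat; [nra|lra]).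
  clearbody L.
  set (k := h + L).
  assert (E : (1 - sg*sg)*L*L = 4*sg*sg*h*k).
  { apply Rminus_diag_uniq.
    replace ((1 - sg*sg)*L*L - 4*sg*sg*h*k) with (((1+sg)*L + 2*sg*h)*(L*(1-sg) - 2*h*sg)) by (unfold k; ring).
    rewrite HL. ring. }
  set (nA := sqrt (x*x+h*h)). set (nB := sqrt (x*x+k*k)).
  assert (HnA : 0 < nA) by (apply sqrt_lt_R0; nra).
  assert (HnB : 0 < nB) by (apply sqrt_lt_R0; unfold k; nra).
  assert (HnA2 : nA*nA = x*x+h*h) by (apply sqrt_sqrt; nra).
  assert (HnB2 : nB*nB = x*x+k*k) by (apply sqrt_sqrt; nra).
  assert (Hprod : c * (nA*nB) <= x*x+h*k).
  { unfold nA, nB. rewrite <- sqrt_mult by nra.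
    apply sqrt_le_aux; [unfold k; nra|lra|nra|].
    assert (EE : (x*x+h*k)*(x*x+h*k) - c*c*((x*x+h*h)*(x*x+k*k))
               = sg*sg*((x*x-h*k)*(x*x-h*k)) + x*x*(4*sg*sg*h*k - (1-sg*sg)*L*L)).
    { replace (c*c) with (1 - sg*sg) by lra. unfold k. ring. }
    rewrite E in EE. replace (4*sg*sg*h*k - 4*sg*sg*h*k) with 0 in EE by ring.
    assert (0 <= sg*sg*((x*x-h*k)*(x*x-h*k))) by (apply Rmult_le_pos; apply Rle_0_sqr).
    lra. }
  clearbody nA nB.
  set (a1 := -x/nA). set (a2 := -h/nA). set (b1 := -x/nB). set (b2 := -k/nB).
  assert (Ha : a1*a1+a2*a2 = 1).
  { unfold a1, a2. transitivity ((x*x+h*h)/(nA*nA)); [field; lra|]. rewrite HnA2. field. nra. }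
  assert (Hb : b1*b1+b2*b2 = 1).
  { unfold b1, b2. transitivity ((x*x+k*k)/(nB*nB)); [field; lra|]. rewrite HnB2. field. unfold k; nra. }
  assert (Hab : c <= a1*b1+a2*b2).
  { unfold a1, a2, b1, b2.
    replace (- x / nA * (- x / nB) + - h / nA * (- k / nB)) with ((x*x+h*k)/(nA*nB)) by (field; lra).
    apply (Rmult_le_reg_r (nA*nB)); [nra|]. unfold Rdiv. rewrite Rmult_assoc, Rinv_l by nra. lra. }
  assert (Ea : a1 = -x/nA /\ a2 = -h/nA /\ b1 = -x/nB /\ b2 = -k/nB) by (repeat split).
  clearbody a1 a2 b1 b2.
  set (N := sqrt ((a1+b1)*(a1+b1) + (a2+b2)*(a2+b2))).
  exists ((a1+b1)/N, (a2+b2)/N).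
  assert (Hgen : forall c1 c2, 0 <= c1 -> 0 <= c2 ->
     dot ((a1+b1)/N, (a2+b2)/N) ((a1+b1)/N, (a2+b2)/N) = 1 /\
     ca * norm (c1*a1+c2*b1, c1*a2+c2*b2) <= dot (c1*a1+c2*b1, c1*a2+c2*b2) ((a1+b1)/N, (a2+b2)/N)).
  { intros c1 c2 H1 H2. apply (key ca a1 a2 b1 b2 c1 c2); try lra. }
  destruct (Hgen 0 0) as [Huu _]; try lra.
  assert (Hall : forall z : R, - L <= z <= 0 -> in_wedge alpha (x, h) ((a1 + b1) / N, (a2 + b2) / N) (0, z)).
  { intros z Hz.
    set (t := - z / L).
    assert (Ht : 0 <= t <= 1).
    { unfold t; split.
      - apply Rmult_le_pos; [lra|]. left; apply Rinv_0_lt_compat; lra.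
      - apply (Rmult_le_reg_r L); [lra|]. unfold Rdiv. rewrite Rmult_assoc, Rinv_l by lra. lra. }
    destruct (Hgen ((1-t)*nA) (t*nB)) as [_ Hin]; try (apply Rmult_le_pos; lra).
    assert (Hw : (((1-t)*nA)*a1 + (t*nB)*b1, ((1-t)*nA)*a2 + (t*nB)*b2) = (-x, z - h)).
    { destruct Ea as [-> [-> [-> ->]]]. unfold t, k. f_equal; field; lra. }
    rewrite Hw in Hin.
    replace (0, z) with (fst (x,h) + fst (-x, z-h), snd (x,h) + snd (-x, z-h)) by (simpl; f_equal; ring).
    apply wedge_of; auto; try lra.
    unfold dot; simpl. nra. }
  split.
  - unfold norm. rewrite Huu. apply sqrt_1.
  - split; [apply Hall; lra | exact Hall].
Qed.
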